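(* Let $\mathcal{H}=(\mathcal{V},\mathcal{E})$ be a connected hypergraph with a vertex $w$ and two proper subsets $\mathcal{V}_1,\mathcal{V}_2$ of $\mathcal{V}$ such that $\mathcal{V}_1\cup\mathcal{V}_2=\mathcal{V}$, $\mathcal{V}_1\cap\mathcal{V}_2=\{w\}$, and every $e\in\mathcal{E}$ satisfies $w\in e$ or $e\subseteq\mathcal{V}_i$ for some $i\in\{1,2\}$. Let $\mathcal{I}_{(\mathcal{V}_1,\mathcal{V}_2)}(\mathcal{H})$ be the set of those $\mathcal{V}_0\in\mathcal{I}(\mathcal{H})$ with $\mathcal{V}_i\subseteq\mathcal{V}_0$ for some $i\in\{1,2\}$. Then $(\lambda-1)^2$ divides $P(\mathcal{H},\lambda)$ if and only if $\lambda^2$ divides the polynomial $\sum_{\mathcal{V}_0\in\mathcal{I}_{(\mathcal{V}_1,\mathcal{V}_2)}(\mathcal{H})}P(\mathcal{H}-\mathcal{V}_0,\lambda)$.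
   Context: A hypergraph $\mathcal{H}=(\mathcal{V},\mathcal{E})$ consists of a finite vertex set $\mathcal{V}$ and a set $\mathcal{E}$ of subsets of $\mathcal{V}$, each of size at least $1$, called edges. For a positive integer $\lambda$, a weak proper $\lambda$-colouring of $\mathcal{H}$ is a map $\phi:\mathcal{V}\to\{1,\dots,\lambda\}$ such that $|\{\phi(v):v\in e\}|>1$ for every $e\in\mathcal{E}$. $P(\mathcal{H},\lambda)$ denotes the number of weak proper $\lambda$-colourings; it is a polynomial in $\lambda$ (equal to $1$ for the hypergraph with no vertices). $\mathcal{H}$ is connected if for any two vertices $v_1,v_2$ there is a sequence of edges $e_0,\dots,e_k$ with $v_1\in e_0$, $v_2\in e_k$, $e_i\cap e_{i+1}\ne\emptyset$. For $\mathcal{V}_0\subseteq\mathcal{V}$, $\mathcal{H}[\mathcal{V}_0]$ has vertex set $\mathcal{V}_0$ and edge set $\{e\in\mathcal{E}:e\subseteq\mathcal{V}_0\}$; $\mathcal{H}-\mathcal{V}_0=\mathcal{H}[\mathcal{V}\setminus\mathcal{V}_0]$; $\mathcal{I}(\mathcal{H})$ is the set of subsets $\mathcal{V}_0\subseteq\mathcal{V}$ such that $\mathcal{H}[\mathcal{V}_0]$ has no edges. *)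

(* Defs.v *)
From HB Require Import structures.
From mathcomp Require Import all_boot all_order all_algebra.
Set Implicit Arguments. Unset Strict Implicit. Unset Printing Implicit Defensive.
Import Order.TTheory GRing.Theory Num.Theory.

Local Open Scope ring_scope.
Section Hyper.
Variable T : finType.

Definition hypergraph (V : {set T}) (E : {set {set T}}) : Prop :=
  forall e, e \in E -> (e \subset V) /\ (e != set0).

Definition hconnected (V : {set T}) (E : {set {set T}}) : Prop :=
  forall v1 v2, v1 \in V -> v2 \in V ->
    exists (e0 : {set T}) (s : seq {set T}),
      [/\ e0 \in E, all (fun e => e \in E) s, v1 \in e0, v2 \in last e0 s
        & path (fun a b : {set T} => a :&: b != set0) e0 s].

Definition is_wproper (V : {set T}) (E : {set {set T}}) (n : nat)
  (f : {ffun {x : T | x \in V} -> 'I_n}) : bool :=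
  [forall e in E, exists x, exists y,
     [&& val x \in e, val y \in e & f x != f y]].

Definition ncol (V : {set T}) (E : {set {set T}}) (n : nat) : nat :=
  #|[set f : {ffun {x : T | x \in V} -> 'I_n} | @is_wproper V E n f]|.

(* the chromatic polynomial P(H, lambda) in Q[lambda]: the Lagrange
   interpolation polynomial of n |-> ncol V E n at n = 0, ..., #|V|
   (ncol is a polynomial function of degree <= #|V|, so this is the
   unique polynomial agreeing with it on all naturals). *)
Definition chrompoly (V : {set T}) (E : {set {set T}}) : {poly rat} :=
  let N := #|V| in
  \sum_(i < N.+1)
    ((ncol V E i)%:R *:
      \prod_(j < N.+1 | j != i)
        ((((i : nat)%:R - (j : nat)%:R) : rat)^-1 *: ('X - ((j : nat)%:R)%:P))).

(* H - V0 = H[V \ V0] : edges of the induced subhypergraph *)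
Definition induced_edges (E : {set {set T}}) (W : {set T}) : {set {set T}} :=
  [set e in E | e \subset W].

Definition indep (V : {set T}) (E : {set {set T}}) (V0 : {set T}) : bool :=
  (V0 \subset V) && [forall e in E, ~~ (e \subset V0)].

End Hyper.

(* Main.v *)
Require Import Defs.
From HB Require Import structures.
From mathcomp Require Import all_boot all_order all_algebra perm.
Set Implicit Arguments. Unset Strict Implicit. Unset Printing Implicit Defensive.
Import Order.TTheory GRing.Theory Num.Theory.

Lemma card_bij_in (aT rT : finType) (A : {set aT}) (B : {set rT}) (f : aT -> rT) :
  {in A &, injective f} -> (forall a, a \in A -> f a \in B) ->
  (forall b, b \in B -> exists2 a, a \in A & b = f a) -> #|A| = #|B|.
Proof.
move=> inj fAB fBA; rewrite -(card_in_imset inj); apply: eq_card => b.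
apply/imsetP/idP => [[a aA ->]|bB]; first exact: fAB.
by have [a aA ->] := fBA b bB; exists a.
Qed.

Section Comb.
Variable T : finType.
Implicit Types (W : {set T}) (F : {set {set T}}).

Definition cdom K W n (f : {ffun T -> 'I_K.+1}) : bool :=
  [forall x, if x \in W then (f x < n)%N else (f x == ord0)].
Definition cprop K F (f : {ffun T -> 'I_K.+1}) : bool :=
  [forall e in F, [exists x, exists y, [&& x \in e, y \in e & f x != f y]]].
Definition Sset K W F n := [set f : {ffun T -> 'I_K.+1} | cdom W n f && cprop F f].

Lemma bridge K W F n : (forall e, e \in F -> e \subset W) -> (n <= K.+1)%N ->
  ncol W F n = #|Sset K W F n|.
Proof.
move=> FW nK.
pose phi (g : {ffun {x : T | x \in W} -> 'I_n}) : {ffun T -> 'I_K.+1} :=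
  [ffun x => if insub x is Some y then widen_ord nK (g y) else ord0].
have phiv g (y : {x : T | x \in W}) : phi g (val y) = widen_ord nK (g y).
  by rewrite /phi ffunE valK.
have phio g x : x \notin W -> phi g x = ord0.
  by move=> xW; rewrite /phi ffunE insubN.
rewrite /ncol; apply: (@card_bij_in _ _ _ _ phi).
- move=> g1 g2 _ _ eq12; apply/ffunP => y; apply/val_inj.
  by have := congr1 (fun f : {ffun T -> 'I_K.+1} => val (f (val y))) eq12; rewrite /= !phiv.
- move=> g; rewrite !inE => pg; apply/andP; split.
    apply/forallP => x; case: ifP => xW.
      by rewrite -[x]/(val (Sub x xW : {x : T | x \in W})) phiv /=.
    by rewrite phio ?xW.
  apply/forallP => e; apply/implyP => eF.
  have := forallP pg e; rewrite eF /= => /existsP [x /existsP [y /and3P [xe ye nxy]]].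
  apply/existsP; exists (val x); apply/existsP; exists (val y).
  rewrite xe ye !phiv /=; apply: contra nxy => /eqP/(congr1 val) /= h.
  by apply/eqP/val_inj.
- move=> f; rewrite inE => /andP [df pf].
  have Hf (y : {x : T | x \in W}) : (f (val y) < n)%N.
    by have := forallP df (val y); rewrite (valP y).
  exists [ffun y => Ordinal (Hf y)].
    rewrite inE; apply/forallP => e; apply/implyP => eF.
    have := forallP pf e; rewrite eF /= => /existsP [x /existsP [y /and3P [xe ye nxy]]].
    have xW : x \in W by apply: (subsetP (FW e eF)).
    have yW : y \in W by apply: (subsetP (FW e eF)).
    apply/existsP; exists (Sub x xW); apply/existsP; exists (Sub y yW).
    rewrite /= xe ye /= !ffunE; apply: contra nxy => /eqP/(congr1 val) /= h.
    by apply/eqP/val_inj.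
  apply/ffunP => x; rewrite /phi !ffunE; case: insubP => [y xW <-|xW].
    by rewrite ffunE; apply/val_inj.
  by have := forallP df x; rewrite (negbTE xW) => /eqP.
Qed.

Definition V0of K W (f : {ffun T -> 'I_K.+1}) := [set x in W | f x == ord_max].

Lemma block K W F V0 : (forall e, e \in F -> e \subset W) ->
  #|[set f in Sset K W F K.+1 | V0of W f == V0]| =
  if indep W F V0 then #|Sset K (W :\: V0) (induced_edges F (W :\: V0)) K| else 0.
Proof.
move=> FW; case: ifP => [/andP [V0W iV0]|niV0]; last first.
  apply/eqP; rewrite cards_eq0; apply/eqP/setP => f; rewrite !inE.
  apply/negbTE/negP => /andP [/andP [df pf] /eqP eV0]; move/negbT: niV0.
  rewrite /indep negb_and => /orP [/negP nV0W|].
    by apply: nV0W; rewrite -eV0; apply/subsetP => x; rewrite inE => /andP [].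
  rewrite negb_forall => /existsP [e]; rewrite negb_imply negbK => /andP [eF eV].
  have := forallP pf e; rewrite eF /= => /existsP [x /existsP [y /and3P [xe ye]]].
  move: (subsetP eV x xe) (subsetP eV y ye); rewrite -eV0 !inE.
  by case/andP => _ /eqP -> /andP [_ /eqP ->]; rewrite eqxx.
pose psi (g : {ffun T -> 'I_K.+1}) : {ffun T -> 'I_K.+1} :=
  [ffun x => if x \in V0 then ord_max else g x].
apply/esym/(@card_bij_in _ _ _ _ psi).
- move=> g1 g2; rewrite !inE => /andP [d1 _] /andP [d2 _] e12.
  apply/ffunP => x; have := congr1 (fun f : {ffun T -> 'I_K.+1} => f x) e12.
  rewrite /= /psi !ffunE; case: ifP => // xV0 _.
  have := forallP d1 x; have := forallP d2 x.
  by rewrite !inE xV0 /= => /eqP -> /eqP ->.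
- move=> g; rewrite !inE => /andP [dg pg].
  have gW x : x \in W -> x \notin V0 -> (g x < K)%N.
    by move=> xW xV; have := forallP dg x; rewrite !inE xV xW.
  have gnW x : x \notin W -> g x = ord0.
    move=> xW; have := forallP dg x; rewrite !inE (negbTE xW) andbF => /eqP //.
  apply/andP; split; first (apply/andP; split).
  + apply/forallP => x; rewrite /psi ffunE; case: ifP => xW.
      by case: ifP => // xV; rewrite ltnW // gW ?xV.
    have xV : x \in V0 = false by apply: contraFF xW; apply: (subsetP V0W).
    by rewrite xV gnW ?xW.
  + apply/forallP => e; apply/implyP => eF.
    case: (boolP (e \subset W :\: V0)) => eWV.
      have := forallP pg e; rewrite inE eF eWV /=.
      move=> /existsP [x /existsP [y /and3P [xe ye nxy]]].
      apply/existsP; exists x; apply/existsP; exists y; rewrite xe ye /psi !ffunE.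
      have := subsetP eWV x xe; have := subsetP eWV y ye; rewrite !inE.
      by case/andP => /negbTE -> _ /andP [/negbTE -> _].
    have [x xe xV] : exists2 x, x \in e & x \in V0.
      move/subsetPn: eWV => [x xe]; rewrite inE negb_and negbK (subsetP (FW e eF) x xe) orbF.
      by exists x.
    have [y ye yV] : exists2 y, y \in e & y \notin V0.
      have := forallP iV0 e; rewrite eF /= => /subsetPn [y ye yV]; by exists y.
    apply/existsP; exists x; apply/existsP; exists y; rewrite xe ye /psi !ffunE xV.
    rewrite (negbTE yV) neq_ltn; apply/orP; right.
    by rewrite /= gW // (subsetP (FW e eF)).
  + apply/eqP/setP => x; rewrite !inE /psi ffunE.
    case: ifP => xV; first by rewrite (subsetP V0W) // eqxx.
    case: (boolP (x \in W)) => //= xW; apply/negbTE; rewrite neq_ltn.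
    by rewrite /= gW ?xV.
- move=> f; rewrite !inE => /andP [/andP [df pf] /eqP eV0].
  have fV x : x \in V0 -> f x = ord_max.
    by rewrite -eV0 inE => /andP [_ /eqP].
  have fnV x : x \in W -> x \notin V0 -> (f x < K)%N.
    move=> xW; rewrite -eV0 inE xW /= => fx; rewrite ltn_neqAle -ltnS ltn_ord andbT.
    by apply: contra fx => /eqP h; apply/eqP/val_inj.
  exists [ffun x => if x \in V0 then ord0 else f x]; last first.
    apply/ffunP => x; rewrite /psi !ffunE; case: ifP => xV.
      by rewrite fV.
    by rewrite xV.
  rewrite inE; apply/andP; split.
    apply/forallP => x; rewrite ffunE !inE; case: (boolP (x \in V0)) => xV /=.
      by case: (x \in W).
    case: (boolP (x \in W)) => xW /=; first by rewrite fnV.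
    by have := forallP df x; rewrite (negbTE xW).
  apply/forallP => e; apply/implyP; rewrite inE => /andP [eF eWV].
  have := forallP pf e; rewrite eF /= => /existsP [x /existsP [y /and3P [xe ye nxy]]].
  apply/existsP; exists x; apply/existsP; exists y; rewrite xe ye !ffunE.
  have := subsetP eWV x xe; have := subsetP eWV y ye; rewrite !inE.
  by case/andP => /negbTE -> _ /andP [/negbTE -> _].
Qed.


Lemma rec_count K W F (Q : pred {set T}) : (forall e, e \in F -> e \subset W) ->
  #|[set f in Sset K W F K.+1 | Q (V0of W f)]| =
  \sum_(V0 | indep W F V0 && Q V0) #|Sset K (W :\: V0) (induced_edges F (W :\: V0)) K|.
Proof.
move=> FW; rewrite -sum1_card (partition_big (fun f => V0of W f) predT) //=.
rewrite [RHS]big_mkcond; apply: eq_bigr => V0 _.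
case: (boolP (Q V0)) => QV0; last first.
  rewrite andbF big_pred0 // => f; rewrite !inE.
  by apply/negbTE/negP => /andP [/andP [_ Qf] /eqP e]; move: Qf; rewrite e (negbTE QV0).
rewrite andbT -block //; rewrite -sum1_card; apply: eq_bigl => f; rewrite !inE.
by case: (boolP (V0of W f == V0)) => [/eqP ->|]; rewrite ?QV0 ?andbT ?andbF.
Qed.

Lemma sym_count K W F w : (forall e, e \in F -> e \subset W) -> w \in W ->
  (K.+1 * #|[set f in Sset K W F K.+1 | f w != ord_max]| = K * #|Sset K W F K.+1|)%N.
Proof.
move=> FW wW; set S := Sset K W F K.+1.
have Hc (c : 'I_K.+1) : #|[set f in S | f w == c]| = #|[set f in S | f w == ord_max]|.
  pose tau (f : {ffun T -> 'I_K.+1}) : {ffun T -> 'I_K.+1} :=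
    [ffun x => if x \in W then tperm c ord_max (f x) else f x].
  have tauK : involutive tau.
    by move=> f; apply/ffunP => x; rewrite !ffunE; case: ifP => // xW; rewrite xW ?tpermK.
  have tauS f : f \in S -> tau f \in S.
    rewrite !inE => /andP [df pf]; apply/andP; split.
      apply/forallP => x; rewrite ffunE; have := forallP df x.
      by case: ifP.
    apply/forallP => e; apply/implyP => eF.
    have := forallP pf e; rewrite eF /= => /existsP [x /existsP [y /and3P [xe ye nxy]]].
    apply/existsP; exists x; apply/existsP; exists y; rewrite xe ye !ffunE.
    rewrite !(subsetP (FW e eF)) //.
    by apply: contra nxy => /eqP /perm_inj ->.
  apply: (@card_bij_in _ _ _ _ tau).
  - by move=> f g _ _ /(congr1 tau); rewrite !tauK.
  - move=> f; rewrite inE => /andP [fS /eqP fw].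
    have := tauS f fS; rewrite inE => ->; by rewrite ffunE wW fw tpermL eqxx.
  - move=> f; rewrite inE => /andP [fS /eqP fw]; exists (tau f); last by rewrite tauK.
    by rewrite inE tauS //= ffunE wW fw tpermR.
have HS : #|S| = (K.+1 * #|[set f in S | f w == ord_max]|)%N.
  rewrite -sum1_card (partition_big (fun f : {ffun T -> 'I_K.+1} => f w) predT) //=.
  rewrite (eq_bigr (fun _ => #|[set f in S | f w == ord_max]|)).
    by rewrite big_const_ord iter_addn_0 mulnC.
  by move=> c _; rewrite -(Hc c) -sum1_card; apply: eq_bigl => f; rewrite inE.
clearbody S.
have := cardsID [set f in S | f w == ord_max] S.
have -> : S :\: [set f in S | f w == ord_max] = [set f in S | f w != ord_max].
  by apply/setP => f; rewrite !inE; case: (f \in S); rewrite ?andbF ?andbT.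
have -> : S :&: [set f in S | f w == ord_max] = [set f in S | f w == ord_max].
  by apply/setP => f; rewrite !inE; case: (f \in S).
move=> e; have eb : #|[set f in S | f w != ord_max]| = (K * #|[set f in S | f w == ord_max]|)%N.
  by apply/eqP; rewrite -(eqn_add2l #|[set f in S | f w == ord_max]|) e -mulSn HS.
by rewrite eb HS mulnCA.
Qed.


Lemma mult_count K (A B : {set T}) F (n : nat) : (forall x, x \in A -> x \notin B) ->
  (forall e, e \in F -> (e \subset A) || (e \subset B)) ->
  #|Sset K (A :|: B) F n| =
  (#|Sset K A (induced_edges F A) n| * #|Sset K B (induced_edges F B) n|)%N.
Proof.
move=> dAB FAB; rewrite -cardsX.
pose r (X : {set T}) (f : {ffun T -> 'I_K.+1}) : {ffun T -> 'I_K.+1} :=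
  [ffun x => if x \in X then f x else ord0].
have rS (X : {set T}) f : f \in Sset K (A :|: B) F n -> X \subset A :|: B ->
    r X f \in Sset K X (induced_edges F X) n.
  rewrite !inE => /andP [df pf] XAB; apply/andP; split.
    apply/forallP => x; rewrite ffunE; case: ifP => xX; rewrite xX //.
    by have := forallP df x; rewrite (subsetP XAB).
  apply/forallP => e; apply/implyP; rewrite inE => /andP [eF eX].
  have := forallP pf e; rewrite eF /= => /existsP [x /existsP [y /and3P [xe ye nxy]]].
  apply/existsP; exists x; apply/existsP; exists y; rewrite xe ye !ffunE.
  by rewrite !(subsetP eX).
apply: (@card_bij_in _ _ _ _ (fun f => (r A f, r B f))).
- move=> f g; rewrite !inE => /andP [df _] /andP [dg _] [eA eB].
  apply/ffunP => x; have := congr1 (fun f : {ffun T -> 'I_K.+1} => f x) eA.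
  have := congr1 (fun f : {ffun T -> 'I_K.+1} => f x) eB; rewrite /= !ffunE.
  case: ifP => xB; case: ifP => xA // _ _.
  have := forallP df x; have := forallP dg x; rewrite !inE xA xB /=.
  by move=> /eqP -> /eqP ->.
- move=> f fS; rewrite in_setX !rS //; [exact: subsetUr | exact: subsetUl].
- case=> g h; rewrite in_setX !inE => /andP [/andP [dg pg] /andP [dh ph]].
  have g0 x : x \notin A -> g x = ord0.
    by move=> xA; have := forallP dg x; rewrite (negbTE xA) => /eqP.
  have h0 x : x \notin B -> h x = ord0.
    by move=> xB; have := forallP dh x; rewrite (negbTE xB) => /eqP.
  exists [ffun x => if x \in A then g x else h x].
    rewrite !inE; apply/andP; split.
      apply/forallP => x; rewrite !inE ffunE; case: (boolP (x \in A)) => xA /=.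
        by have := forallP dg x; rewrite xA.
      by have := forallP dh x; case: (x \in B).
    apply/forallP => e; apply/implyP => eF.
    case/orP: (FAB e eF) => eS.
      have := forallP pg e; rewrite inE eF eS /=.
      move=> /existsP [x /existsP [y /and3P [xe ye nxy]]].
      apply/existsP; exists x; apply/existsP; exists y; rewrite xe ye !ffunE.
      by rewrite !(subsetP eS).
    have := forallP ph e; rewrite inE eF eS /=.
    move=> /existsP [x /existsP [y /and3P [xe ye nxy]]].
    apply/existsP; exists x; apply/existsP; exists y; rewrite xe ye !ffunE.
    have xnA : x \in A = false.
      by apply/negbTE/negP => xA; move: (dAB x xA); rewrite (subsetP eS).
    have ynA : y \in A = false.
      by apply/negbTE/negP => yA; move: (dAB y yA); rewrite (subsetP eS).
    by rewrite xnA ynA.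
  congr (_, _); apply/ffunP => x; rewrite !ffunE.
    by case: (boolP (x \in A)) => xA //; rewrite g0.
  case: (boolP (x \in B)) => xB; case: (boolP (x \in A)) => xA //=.
  - by move: (dAB x xA); rewrite xB.
  - by rewrite h0.
  - by rewrite h0.
Qed.

End Comb.

Local Open Scope ring_scope.

Lemma poly_agree (p q : {poly rat}) N : (size p <= N.+1)%N -> (size q <= N.+1)%N ->
  (forall k, (k <= N)%N -> p.[k%:R] = q.[k%:R]) -> p = q.
Proof.
move=> sp sq H; apply/eqP; rewrite -subr_eq0; apply/eqP.
apply: (@roots_geq_poly_eq0 _ _ [seq (k%:R : rat) | k <- iota 0 N.+1]).
- apply/allP => x /mapP [k]; rewrite mem_iota add0n ltnS => /andP [_ kN] ->.
  by rewrite /root hornerD hornerN H // subrr.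
- rewrite map_inj_uniq ?iota_uniq // => a b /eqP; rewrite eqr_nat => /eqP //.
- rewrite size_map size_iota; apply: leq_trans (size_polyD _ _) _.
  by rewrite size_polyN geq_max sp sq.
Qed.

Lemma poly_nat_eq (p q : {poly rat}) : (forall k, p.[k%:R] = q.[k%:R]) -> p = q.
Proof.
move=> H; apply: (@poly_agree _ _ (maxn (size p) (size q))) => //.
- by apply: leq_trans (leq_maxl _ _) _.
- by apply: leq_trans (leq_maxr _ _) _.
Qed.

Definition ff (d : nat) : {poly rat} := \prod_(0 <= i < d) ('X - (i%:R)%:P).

Lemma size_ff d : size (ff d) = d.+1.
Proof. by rewrite /ff (size_prod_XsubC (index_iota 0 d) (fun i : nat => (i%:R : rat))) size_iota subn0. Qed.

Lemma lead_ff d : lead_coef (ff d) = 1.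
Proof. by rewrite /ff lead_coef_prod_XsubC. Qed.

Lemma ff_diff d (x : rat) : (ff d.+1).[x + 1] - (ff d.+1).[x] = d.+1%:R * (ff d).[x].
Proof.
rewrite /ff !horner_prod big_nat_recl // big_nat_recr //= !hornerXsubC.
have -> : \prod_(0 <= i < d) ('X - (i.+1%:R)%:P).[x + 1] =
          \prod_(0 <= i < d) ('X - (i%:R)%:P).[x].
  apply: eq_bigr => i _; rewrite !hornerXsubC -addn1 natrD.
  by rewrite opprD addrACA subrr addr0.
rewrite subr0 [_ * (x - _)]mulrC -mulrBl; congr (_ * _).
rewrite -addn1 natrD opprB.
by rewrite addrC addrA subrK.
Qed.

Lemma antideriv N (q : {poly rat}) : (size q <= N)%N ->
  exists h : {poly rat}, (size h <= N.+1)%N /\ forall x, h.[x + 1] - h.[x] = q.[x].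
Proof.
elim: N q => [|N IH] q sq.
  exists 0; split; first by rewrite size_poly0.
  move=> x; move: sq; rewrite size_poly_leq0 => /eqP ->.
  by rewrite !horner0 subrr.
set c := q`_N.
have sq' : (size (q - c *: ff N)%R <= N)%N.
  apply/leq_sizeP => j; rewrite leq_eqVlt => /orP [/eqP <-|Nj].
    rewrite coefB coefZ.
    have -> : (ff N)`_N = 1 by rewrite -(lead_ff N) /lead_coef size_ff.
    by rewrite mulr1 subrr.
  rewrite coefB coefZ.
  have -> : q`_j = 0 by move/leq_sizeP: sq; apply.
  have -> : (ff N)`_j = 0 by apply/leq_sizeP: Nj; rewrite size_ff.
  by rewrite mulr0 subrr.
have [h [sh Hh]] := IH _ sq'.
exists (h + (c / N.+1%:R) *: ff N.+1); split.
  apply: leq_trans (size_polyD _ _) _; rewrite geq_max (leq_trans sh) //.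
  by apply: leq_trans (size_scale_leq _ _) _; rewrite size_ff.
move=> x; rewrite !hornerD !hornerZ opprD addrACA -mulrBr ff_diff Hh.
rewrite hornerD hornerN hornerZ mulrA divfK ?pnatr_eq0 //.
by rewrite subrK.
Qed.

Lemma poly_of_diff N (f : nat -> rat) (q : {poly rat}) : (size q <= N)%N ->
  (forall n, f n.+1 - f n = q.[n%:R]) ->
  exists p : {poly rat}, (size p <= N.+1)%N /\ forall n, p.[n%:R] = f n.
Proof.
move=> sq Hf; have [h [sh Hh]] := antideriv sq.
exists (h + (f 0%N - h.[0])%:P); split.
  apply: leq_trans (size_polyD _ _) _; rewrite geq_max sh /=.
  by apply: leq_trans (size_polyC_leq1 _) _.
elim=> [|n IHn]; first by rewrite hornerD hornerC addrC subrK.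
move: IHn; rewrite !hornerD !hornerC -addn1 natrD => IHn.
rewrite -[h.[_ + 1]](subrK h.[n%:R]) Hh.
by rewrite -addrA IHn -Hf addn1 subrK.
Qed.

Definition lagr (N : nat) (c : nat -> nat) : {poly rat} :=
  \sum_(i < N.+1)
    ((c i)%:R *:
      \prod_(j < N.+1 | j != i)
        ((((i : nat)%:R - (j : nat)%:R) : rat)^-1 *: ('X - ((j : nat)%:R)%:P))).

Lemma chrompolyE (T : finType) (W : {set T}) F : chrompoly W F = lagr #|W| (ncol W F).
Proof. by []. Qed.

Lemma size_lagr N c : (size (lagr N c) <= N.+1)%N.
Proof.
rewrite /lagr; apply: (big_ind (fun p : {poly rat} => size p <= N.+1)%N).
- by rewrite size_poly0.
- by move=> p q sp sq; apply: leq_trans (size_polyD _ _) _; rewrite geq_max sp sq.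
move=> i _; apply: leq_trans (size_scale_leq _ _) _.
rewrite scaler_prod; apply: leq_trans (size_scale_leq _ _) _.
rewrite -big_filter size_prod_XsubC size_filter.
have -> : count (fun j => j != i) (index_enum 'I_N.+1) = #|predC1 i|.
  by rewrite cardE /enum_mem size_filter /index_enum unlock.
by rewrite cardC1 card_ord.
Qed.

Lemma lagr_eval N c k : (k <= N)%N -> (lagr N c).[k%:R] = (c k)%:R.
Proof.
move=> kN; have kN1 : (k < N.+1)%N by [].
rewrite /lagr horner_sum (bigD1 (Ordinal kN1)) //= [X in _ + X]big1 ?addr0.
  rewrite hornerZ horner_prod big1 ?mulr1 // => j /= jk.
  rewrite hornerZ hornerXsubC mulVf // subr_eq0 eqr_nat.
  by apply: contra jk => /eqP jk'; apply/eqP/val_inj.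
move=> i ik; rewrite hornerZ horner_prod (bigD1 (Ordinal kN1)) //=.
  by rewrite hornerZ hornerXsubC subrr mulr0 mul0r mulr0.
by rewrite eq_sym.
Qed.

Local Close Scope ring_scope.

Section Main.
Variable T : finType.
Implicit Types (W : {set T}) (F : {set {set T}}).

Lemma hyp_sub W F : hypergraph W F -> forall e, e \in F -> e \subset W.
Proof. by move=> h e /h []. Qed.

Lemma hyp_ind W F V0 : hypergraph W F ->
  hypergraph (W :\: V0) (induced_edges F (W :\: V0)).
Proof. by move=> h e; rewrite inE => /andP [/h [_ ->] ->]. Qed.

Lemma ncol_S W F n : hypergraph W F -> ncol W F n.+1 = #|Sset n W F n.+1|.
Proof. by move=> h; apply: bridge => //; apply: hyp_sub. Qed.

Lemma ncol_rec W F (Q : pred {set T}) n : hypergraph W F ->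
  #|[set f in Sset n W F n.+1 | Q (V0of W f)]| =
  \sum_(V0 | indep W F V0 && Q V0) ncol (W :\: V0) (induced_edges F (W :\: V0)) n.
Proof.
move=> h; rewrite rec_count; last exact: hyp_sub.
apply: eq_bigr => V0 _; rewrite (@bridge _ n) //.
by move=> e; rewrite inE => /andP [].
Qed.

Lemma ncol_rec_all W F n : hypergraph W F ->
  ncol W F n.+1 = (ncol W F n +
    \sum_(V0 | indep W F V0 && (V0 != set0)) ncol (W :\: V0) (induced_edges F (W :\: V0)) n)%N.
Proof.
move=> h; rewrite ncol_S //.
have -> : Sset n W F n.+1 = [set f in Sset n W F n.+1 | predT (V0of W f)].
  by apply/setP => f; rewrite inE andbT.
rewrite ncol_rec // (bigD1 set0) /=; last first.
  rewrite andbT /indep sub0set /=; apply/forallP => e; apply/implyP => /h [_].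
  by rewrite subset0.
congr (_ + _)%N.
  rewrite setD0; congr ncol; apply/setP => e; rewrite inE.
  by case: (boolP (e \in F)) => // /h [->].
by apply: eq_bigl => V0; rewrite andbT.
Qed.


Lemma card_lt W (V0 : {set T}) : V0 \subset W -> V0 != set0 -> (#|W :\: V0| < #|W|)%N.
Proof.
move=> VW /set0Pn [x xV]; rewrite cardsD ltn_subrL; apply/andP; split.
  by rewrite card_gt0; apply/set0Pn; exists x; rewrite inE xV (subsetP VW).
by rewrite card_gt0; apply/set0Pn; exists x; rewrite (subsetP VW).
Qed.

Local Open Scope ring_scope.

Lemma chromE W F : hypergraph W F -> forall n, (chrompoly W F).[n%:R] = (ncol W F n)%:R.
Proof.
have [m] := ubnP #|W|; elim: m W F => // m IH W F ltW h.
pose q := \sum_(V0 | indep W F V0 && (V0 != set0))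
            chrompoly (W :\: V0) (induced_edges F (W :\: V0)).
have sq : (size q <= #|W|)%N.
  apply: (big_ind (fun p : {poly rat} => size p <= #|W|)%N).
  - by rewrite size_poly0.
  - by move=> p1 p2 s1 s2; apply: leq_trans (size_polyD _ _) _; rewrite geq_max s1 s2.
  move=> V0 /andP [/andP [VW _] V0n]; rewrite chrompolyE.
  by apply: leq_trans (size_lagr _ _) _; apply: card_lt.
have Hd : forall n, (ncol W F n.+1)%:R - (ncol W F n)%:R = q.[n%:R] :> rat.
  move=> n; rewrite ncol_rec_all // natrD addrAC subrr add0r natr_sum horner_sum.
  apply: eq_bigr => V0 /andP [/andP [VW _] V0n]; apply/esym/IH; last exact: hyp_ind.
  by rewrite -ltnS (leq_trans _ ltW) // ltnS card_lt.
have [p [sp Hp]] := @poly_of_diff #|W| (fun n => (ncol W F n)%:R) q sq Hd.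
have -> : chrompoly W F = p.
  apply: (@poly_agree _ _ #|W|); rewrite ?chrompolyE ?size_lagr //.
  by move=> k kW; rewrite lagr_eval // Hp.
exact: Hp.
Qed.


Lemma comp_shift (P : {poly rat}) :
  (('X - 1) ^+ 2 %| P) = ('X ^+ 2 %| P \Po ('X + 1)).
Proof.
have e1 : ('X - 1) \Po ('X + 1) = 'X :> {poly rat}.
  by rewrite comp_polyB comp_polyX -polyC1 comp_polyC polyC1 addrK.
have e2 : ('X + 1) \Po ('X - 1) = 'X :> {poly rat}.
  by rewrite comp_polyD comp_polyX -polyC1 comp_polyC polyC1 subrK.
apply/idP/idP => /dvdpP [r er].
  by rewrite er comp_polyM !expr2 !comp_polyM e1 dvdp_mull.
have -> : P = (P \Po ('X + 1)) \Po ('X - 1) by rewrite -comp_polyA e2 comp_polyXr.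
by rewrite er comp_polyM !expr2 !comp_polyM comp_polyX dvdp_mull.
Qed.


Lemma hyp_indA W F (A : {set T}) : hypergraph W F -> hypergraph A (induced_edges F A).
Proof. by move=> h e; rewrite inE => /andP [/h [_ ->] ->]. Qed.

Lemma ncol_rec_full W F n : hypergraph W F ->
  ncol W F n.+1 =
  (\sum_(V0 | indep W F V0) ncol (W :\: V0) (induced_edges F (W :\: V0)) n)%N.
Proof.
move=> h; rewrite ncol_S //.
have -> : Sset n W F n.+1 = [set f in Sset n W F n.+1 | predT (V0of W f)].
  by apply/setP => f; rewrite inE andbT.
by rewrite ncol_rec //; apply: eq_bigl => V0; rewrite andbT.
Qed.

Lemma ncol0 W F : hypergraph W F -> W != set0 -> ncol W F 0 = 0%N.
Proof.
move=> h /set0Pn [x xW]; rewrite (@bridge _ 0) //; last exact: hyp_sub.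
apply/eqP; rewrite cards_eq0; apply/eqP/setP => f; rewrite !inE.
by apply/negbTE/negP => /andP [/forallP /(_ x)]; rewrite xW.
Qed.

Lemma ncol1 W F e : hypergraph W F -> e \in F -> ncol W F 1 = 0%N.
Proof.
move=> h eF; rewrite (@bridge _ 0) //; last exact: hyp_sub.
apply/eqP; rewrite cards_eq0; apply/eqP/setP => f; rewrite !inE.
apply/negbTE/negP => /andP [_ /forallP /(_ e)]; rewrite eF /=.
by case/existsP => x /existsP [y /and3P [_ _]]; rewrite (ord1 (f x)) (ord1 (f y)).
Qed.

End Main.

Local Open Scope ring_scope.

Theorem proposition9 (T : finType) (V : {set T}) (E : {set {set T}})
  (w : T) (V1 V2 : {set T}) :
  hypergraph V E ->
  hconnected V E ->
  w \in V ->
  V1 \proper V -> V2 \proper V ->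
  V1 :|: V2 = V ->
  V1 :&: V2 = [set w] ->
  (forall e, e \in E -> [|| w \in e, e \subset V1 | e \subset V2]) ->
  (('X - 1) ^+ 2 %| chrompoly V E)
  = ('X ^+ 2 %| \sum_(V0 : {set T} | indep V E V0 && ((V1 \subset V0) || (V2 \subset V0)))
                  chrompoly (V :\: V0) (induced_edges E (V :\: V0))).
Proof.
move=> hH conn wV pV1 pV2 UV IV Ecut.
have wV12 : (w \in V1) && (w \in V2).
  by have := congr1 (fun A : {set T} => w \in A) IV; rewrite /= !inE eqxx.
case/andP: wV12 => wV1 wV2.
have [e0 e0E] : exists e, e \in E.
  by have [e [s [eE _ _ _ _]]] := conn w w wV wV; exists e.
have HI : chrompoly V E \Po ('X + 1) =
    \sum_(V0 | indep V E V0) chrompoly (V :\: V0) (induced_edges E (V :\: V0)).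
  apply: poly_nat_eq => n; rewrite horner_comp hornerD hornerX hornerC natr1.
  rewrite chromE // ncol_rec_full // natr_sum horner_sum; apply: eq_bigr => V0 _.
  by rewrite chromE //; apply: hyp_ind.
have HII : ('X + 1) * \sum_(V0 | indep V E V0 && (w \notin V0))
      chrompoly (V :\: V0) (induced_edges E (V :\: V0)) =
    'X * (chrompoly V E \Po ('X + 1)).
  apply: poly_nat_eq => n.
  rewrite !hornerM hornerD hornerX hornerC horner_comp hornerD hornerX hornerC natr1.
  rewrite chromE // horner_sum.
  rewrite (eq_bigr (fun V0 => (ncol (V :\: V0) (induced_edges E (V :\: V0)) n)%:R)); last first.
    by move=> V0 _; rewrite chromE //; apply: hyp_ind.
  rewrite -natr_sum -!natrM; congr (_%:R).
  rewrite -(ncol_rec (fun V0 => w \notin V0)) // ncol_S //.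
  rewrite -(@sym_count _ n V E w) //; last exact: hyp_sub.
  congr (_ * _)%N; apply: eq_card => f; rewrite !inE wV //.
have dX (p : {poly rat}) : ('X %| p) = root p 0.
  by rewrite -dvdp_XsubCl polyC0 subr0.
have HX : 'X %| chrompoly V E \Po ('X + 1).
  rewrite dX /root horner_comp hornerD hornerX hornerC.
  by rewrite add0r (_ : (1 : rat) = (1%N)%:R) // chromE // (ncol1 hH e0E).
have HR : 'X ^+ 2 %| \sum_(V0 | indep V E V0 && (w \notin V0))
      chrompoly (V :\: V0) (induced_edges E (V :\: V0)).
  have cop : coprimep ('X ^+ 2) ('X + 1 : {poly rat}).
    rewrite (_ : 'X + 1 = 'X - (-1)%:P); last by rewrite polyCN opprK polyC1.
    by rewrite coprimep_XsubC /root hornerXn expr2 mulrNN mulr1 oner_eq0.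
  rewrite -(Gauss_dvdpr _ cop) HII; case/dvdpP: HX => r ->.
  by rewrite mulrCA -expr2 dvdp_mull.
have HM : 'X ^+ 2 %| \sum_(V0 | (indep V E V0 && ~~ ((V1 \subset V0) || (V2 \subset V0)))
                               && (w \in V0))
      chrompoly (V :\: V0) (induced_edges E (V :\: V0)).
  apply: (big_ind (fun p : {poly rat} => 'X ^+ 2 %| p)); first exact: dvdp0.
    by move=> p1 p2; apply: dvdp_add.
  move=> V0 /andP [/andP [iV0 n12] wV0].
  rewrite negb_or in n12; case/andP: n12 => n1 n2.
  have hV0 := @hyp_ind _ _ _ V0 hH.
  set F := induced_edges E (V :\: V0).
  set A := V1 :\: V0; set B := V2 :\: V0.
  have eAB : V :\: V0 = A :|: B by rewrite -UV setDUl.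
  have dAB : forall x, x \in A -> x \notin B.
    move=> x; rewrite !inE => /andP [xV0 xV1]; apply/negP => /andP [_ xV2].
    have : x \in V1 :&: V2 by rewrite inE xV1 xV2.
    by rewrite IV inE => /eqP xw; rewrite xw wV0 in xV0.
  have FAB : forall e, e \in F -> (e \subset A) || (e \subset B).
    move=> e; rewrite inE => /andP [eE eVV0].
    have we : w \notin e.
      by apply/negP => we; have := subsetP eVV0 w we; rewrite inE wV0.
    case/or3P: (Ecut e eE) => [we'|e1|e2]; first by rewrite we' in we.
      apply/orP; left; apply/subsetP => x xe.
      have := subsetP eVV0 x xe; rewrite !inE => /andP [-> _].
      by rewrite (subsetP e1 x xe).
    apply/orP; right; apply/subsetP => x xe.
    have := subsetP eVV0 x xe; rewrite !inE => /andP [-> _].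
    by rewrite (subsetP e2 x xe).
  have hA := @hyp_indA _ _ _ A hV0; have hB := @hyp_indA _ _ _ B hV0.
  have Hprod : chrompoly (V :\: V0) F =
      chrompoly A (induced_edges F A) * chrompoly B (induced_edges F B).
    apply: poly_nat_eq => n; rewrite hornerM !chromE // -natrM; congr (_%:R).
    rewrite eAB (@bridge _ n) //; last by rewrite -eAB; apply: hyp_sub hV0.
    rewrite (@bridge _ n A) //; last exact: hyp_sub hA.
    rewrite (@bridge _ n B) //; last exact: hyp_sub hB.
    exact: mult_count.
  have ne (X : {set T}) : ~~ (X \subset V0) -> X :\: V0 != set0.
    by case/subsetPn => x xX xV; apply/set0Pn; exists x; rewrite inE xV xX.
  rewrite Hprod expr2; apply: dvdp_mul; rewrite dX /root.
    by rewrite (_ : (0 : rat) = (0%N)%:R) // chromE // ncol0 // ne.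
  by rewrite (_ : (0 : rat) = (0%N)%:R) // chromE // ncol0 // ne.
rewrite comp_shift HI (bigID (fun V0 : {set T} => (V1 \subset V0) || (V2 \subset V0)) (fun V0 => indep V E V0)) /=.
rewrite [X in _ + X](bigID (fun V0 : {set T} => w \in V0) (fun V0 => indep V E V0 && ~~ ((V1 \subset V0) || (V2 \subset V0)))) /=.
rewrite dvdp_addl //; apply: dvdp_add => //.
rewrite (eq_bigl (fun V0 => indep V E V0 && (w \notin V0))) // => V0.
case: (boolP (w \in V0)) => wV0; rewrite ?andbF ?andbT //.
case: (indep V E V0) => //=; apply/negP => /orP [] /subsetP /(_ w).
  by rewrite wV1 (negbTE wV0) => /(_ isT).
by rewrite wV2 (negbTE wV0) => /(_ isT).
Qed.
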